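(* Let $N,k$ be positive integers with $k\le N/2$, and for a real $c\ge3$ with $N/c$ a positive integer define $$\gamma(N,k,c)=\sum_{m=0}^{\lfloor k/2\rfloor}\binom{N/c}{m}^2\binom{(1-2/c)N}{k-2m}.$$ Then $\big(\binom{N}{k}-\gamma(N,k,c)\big)/\binom{N}{k}=O(k/c)$, with an absolute implied constant, for every such $c\ge3$.
   Context: $\big(\binom{N}{k}-\gamma(N,k,c)\big)/\binom{N}{k}$ equals the probability that a balance with $N/c$ coins on each pan is tilted, when the placed coins are chosen among $N$ coins of which $k$ uniformly random ones are false (all false coins having equal weight). *)

(* Defs.v *)
(* (concrete reals R), with MathComp's nat binomial 'C(n, k)
   (which is 0 when k > n, unlike Stdlib's Binomial.C). *)
From mathcomp Require Import ssreflect ssrbool ssrnat binomial.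
From Stdlib Require Import Reals.
Open Scope R_scope.

(* gamma(N,k,c) where n = N/c is a positive integer, so (1 - 2/c) N = N - 2n:
   gamma = \sum_{m=0}^{floor(k/2)} C(n,m)^2 * C(N - 2n, k - 2m). *)
Definition gamma (N k n : nat) : R :=
  sum_f_R0 (fun m : nat => INR 'C(n, m) ^ 2 * INR 'C((N - 2 * n)%nat, (k - 2 * m)%nat))
           (k./2)%nat.

(* Main.v *)
Require Import Defs.
From Stdlib Require Import Reals Lra Lia.
From mathcomp Require Import ssreflect ssrbool ssrnat binomial.
From mathcomp Require Import eqtype fintype bigop zify.
From Stdlib Require Import Reals.
Open Scope R_scope.

Definition gnat (N k n : nat) : nat :=
  (\sum_(0 <= m < (k./2).+1) 'C(n, m) * 'C(n, m) * 'C(N - 2 * n, k - 2 * m))%nat.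

Lemma gamma_gnat N k n : gamma N k n = INR (gnat N k n).
Proof.
rewrite /gamma /gnat. elim: (k./2) => [|u IH].
  by rewrite /= big_nat1 mult_INR /= mult_INR Rmult_1_r.
rewrite /= IH [X in _ = INR X]big_nat_recr //= plus_INR mult_INR /= mult_INR Rmult_1_r //.
Qed.

Lemma le_upto (F : nat -> nat) i u : (i < u)%nat -> (F i <= \sum_(0 <= j < u) F j)%nat.
Proof.
elim: u => [//|u IH] Hi. rewrite big_nat_recr //=.
case: (ltnP i u) => H. have := IH H. lia.
have -> : i = u by lia. lia.
Qed.

Lemma mono_upto (F : nat -> nat) u v : (u <= v)%nat ->
  (\sum_(0 <= j < u) F j <= \sum_(0 <= j < v) F j)%nat.
Proof.
elim: v => [|v IH] H. have -> : u = 0%nat by lia. by [].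
case: (leqP u v) => H'. rewrite big_nat_recr //=. have := IH H'. lia.
have -> : u = v.+1 by lia. by [].
Qed.

Lemma even_le (G : nat -> nat) u :
  (\sum_(0 <= m < u.+1) G (2 * m)%nat <= \sum_(0 <= j < (2 * u).+1) G j)%nat.
Proof.
elim: u => [|u IH]. by rewrite !big_nat1.
rewrite (big_nat_recr u.+1) //= (_ : (2 * u.+1).+1 = ((2*u).+1).+2)%nat; last lia.
rewrite (big_nat_recr (2*u).+2) //= (big_nat_recr (2*u).+1) //=.
have -> : (2 * u).+2 = (2 * u.+1)%nat by lia. lia.
Qed.

Lemma sq_le n m : ('C(n, m) * 'C(n, m) <= 'C(2 * n, 2 * m))%nat.
Proof.
have -> : (2 * n = n + n)%nat by lia.
rewrite -Vandermonde -(big_mkord xpredT (fun j => 'C(n, j) * 'C(n, 2 * m - j)))%nat.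
have E : ('C(n, m) * 'C(n, m) = (fun j => 'C(n, j) * 'C(n, 2 * m - j)) m)%nat.
  rewrite /= (_ : 2 * m - m = m)%nat; last lia. by [].
rewrite E. apply: le_upto. lia.
Qed.

Lemma gnat_le N k n : (2 * n <= N)%nat -> (gnat N k n <= 'C(N, k))%nat.
Proof.
move=> H. rewrite /gnat.
have -> : 'C(N, k) = 'C(2 * n + (N - 2 * n), k) by rewrite subnKC.
rewrite -Vandermonde -(big_mkord xpredT (fun j => 'C(2*n, j) * 'C(N - 2 * n, k - j)))%nat.
apply: (@leq_trans (\sum_(0 <= m < (k./2).+1) 'C(2 * n, 2 * m) * 'C(N - 2 * n, k - 2 * m))%nat).
  apply: leq_sum => m _. apply: leq_mul => //. exact: sq_le.
apply: leq_trans; first exact: (even_le (fun j => 'C(2 * n, j) * 'C(N - 2 * n, k - j))%nat).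
apply: mono_upto. have := odd_double_half k. rewrite -muln2. case: (odd k) => /=; lia.
Qed.

Lemma gnat_ge N k n : ('C(N - 2 * n, k) <= gnat N k n)%nat.
Proof.
rewrite /gnat.
have := le_upto (fun m => 'C(n, m) * 'C(n, m) * 'C(N - 2 * n, k - 2 * m))%nat 0 (k./2).+1 (ltn0Sn _).
by rewrite bin0 muln0 subn0 !mul1n.
Qed.

Lemma tele N k t : (t <= N)%nat ->
  ('C(N, k.+1) - 'C(N - t, k.+1) <= t * 'C(N.-1, k))%nat.
Proof.
elim: t => [|t IH] H. by rewrite subn0 subnn.
have H1 := IH (ltnW H).
have E : (N - t = (N - t.+1).+1)%nat by lia.
have := binS (N - t.+1) k. rewrite -E => Hb.
have Hl : ('C(N - t.+1, k) <= 'C(N.-1, k))%nat by apply: leq_bin2l; lia.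
lia.
Qed.

Lemma keyC N k n : (0 < k)%nat -> (2 * n <= N)%nat ->
  (N * ('C(N, k) - 'C(N - 2 * n, k)) <= 2 * n * k * 'C(N, k))%nat.
Proof.
case: k => [//|k] _ H.
have T := @tele N k (2 * n)%nat H.
have D := mul_bin_diag N k.
apply: (@leq_trans (N * (2 * n * 'C(N.-1, k)))%nat).
  by apply: leq_mul.
rewrite mulnCA D. lia.
Qed.

Theorem lemma6 :
  exists K : R, forall (N k : nat) (c : R) (n : nat),
    (0 < N)%nat -> (0 < k)%nat -> (2 * k <= N)%nat ->
    3 <= c -> (0 < n)%nat -> INR N / c = INR n ->
    Rabs ((INR 'C(N, k) - gamma N k n) / INR 'C(N, k)) <= K * (INR k / c).
Proof.
exists 2. move=> N k c n HN Hk HkN Hc Hn Hnc.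
have Nr : 0 < INR N by apply: lt_0_INR; apply/ltP.
have Hcn : INR N = c * INR n by rewrite -Hnc; field; lra.
have H2n : (2 * n <= N)%nat.
  apply/leP; apply: INR_le. rewrite mult_INR Hcn /=. 
  have : 0 < INR n by apply: lt_0_INR; apply/ltP. nra.
have Cp : (0 < 'C(N, k))%nat by rewrite bin_gt0; lia.
have Cr : 0 < INR 'C(N, k) by apply: lt_0_INR; apply/ltP.
rewrite gamma_gnat.
have G1 := @gnat_le N k n H2n. have G2 := gnat_ge N k n. have K := @keyC N k n Hk H2n.
have G1r : INR (gnat N k n) <= INR 'C(N, k) by apply: le_INR; apply/leP.
have G2r : INR 'C(N - 2 * n, k) <= INR (gnat N k n) by apply: le_INR; apply/leP.
have Kr : INR N * (INR 'C(N, k) - INR 'C(N - 2 * n, k)) <= 2 * INR n * INR k * INR 'C(N, k).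
  have := le_INR _ _ (elimT leP K). rewrite !mult_INR minus_INR; last first.
    apply/leP; apply: leq_trans G2 G1.
  by [].
move: G1r G2r Kr Cr.
set C := INR 'C(N, k). set g := INR (gnat N k n). set l := INR 'C(N - 2 * n, k).
move=> G1r G2r Kr Cr.
rewrite Rabs_right; last first.
  apply: Rle_ge. apply: Rmult_le_pos; first lra. apply: Rlt_le; apply: Rinv_0_lt_compat; lra.
have nr : 0 < INR n by apply: lt_0_INR; apply/ltP.
rewrite Hcn in Kr.
have A : C - g <= 2 * INR k * C / c.
  apply: (Rmult_le_reg_l (c * INR n)). nra.
  have E : c * INR n * (2 * INR k * C / c) = 2 * INR n * INR k * C by field; lra.
  rewrite E. nra.
apply: (Rmult_le_reg_l C) => //.
have E1 : C * ((C - g) / C) = C - g by field; lra.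
have E2 : C * (2 * (INR k / c)) = 2 * INR k * C / c by field; lra.
rewrite E1 E2. exact: A.
Qed.
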